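(* Let $C=w_1-\dots-w_m$ be a chain with positive weights and let $C=C_1-\dots-C_{p+1}$ be a decomposition of $C$ (given by $0=i_0<i_1<\dots<i_p<i_{p+1}=m$) into subchains each of which is extremal. If the gluing conditions $$\Delta_j\ge 0\ \text{for all } j \text{ with } i_j \text{ odd},\qquad \Delta_j\le 0\ \text{for all } j\text{ with } i_j\text{ even}$$ hold ($1\le j\le p$), then $L_1(C)=\sum_{j=1}^{p+1}L_1(C_j)=\sum_{j=1}^{p+1}L_\emptyset(C_j)$.
   Context: For a chain $C'=v_1-\dots-v_r$ with $r\ge 2$ edges and positive weights: $L_1(C')=\max\{\sum_{i=1}^r v_ix_i : x\in\mathbb{R}^r,\ x_i^2+x_{i+1}^2\le 1\ \forall\,1\le i\le r-1\}$; $L_\emptyset(C')=\sqrt{(\sum_{i\text{ odd}}v_i)^2+(\sum_{i\text{ even}}v_i)^2}$; $C'$ is extremal if $L_1(C')=L_\emptyset(C')$ (extremality is only defined for chains with at least two edges). The subchains are $C_j=w_{i_{j-1}+1}-\dots-w_{i_j}$. Let $\tilde\Sigma_{\rm odd}(C_j)=\sum\{w_i : i_{j-1}<i\le i_j,\ i\text{ odd}\}$, $\tilde\Sigma_{\rm even}(C_j)=\sum\{w_i : i_{j-1}<i\le i_j,\ i\text{ even}\}$ (parity with respect to the numbering in $C$), and $\Delta_j=\tilde\Sigma_{\rm even}(C_j)\tilde\Sigma_{\rm odd}(C_{j+1})-\tilde\Sigma_{\rm even}(C_{j+1})\tilde\Sigma_{\rm odd}(C_j)$ for $1\le j\le p$.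 *)

(* Defs.v *)
From mathcomp Require Import all_boot all_order all_algebra.
From mathcomp Require Import classical_sets reals.
Set Implicit Arguments. Unset Strict Implicit. Unset Printing Implicit Defensive.
Import Order.TTheory GRing.Theory Num.Theory.
Local Open Scope ring_scope.
Local Open Scope classical_set_scope.

(* A chain v_1 - ... - v_r is represented by its weight list v : seq R;
   v_i (1-based) is v`_(i-1) (0-based). *)

Definition feasible (R : realType) (r : nat) (x : nat -> R) : Prop :=
  forall i : nat, (i.+1 < r)%N -> x i ^+ 2 + x i.+1 ^+ 2 <= 1.

(* L_1(C') = max { sum_i v_i x_i : x feasible } (taken as the supremum,
   which is attained for r >= 2). *)
Definition L1 (R : realType) (v : seq R) : R :=
  sup [set y : R | exists x : nat -> R,
        feasible (size v) x /\ y = \sum_(i < size v) v`_i * x i].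

(* 1-based index i+1 is odd iff 0-based index i is even. *)
Definition sum_odd1 (R : realType) (v : seq R) : R :=
  \sum_(i < size v | ~~ odd i) v`_i.
Definition sum_even1 (R : realType) (v : seq R) : R :=
  \sum_(i < size v | odd i) v`_i.

Definition Lempty (R : realType) (v : seq R) : R :=
  Num.sqrt (sum_odd1 v ^+ 2 + sum_even1 v ^+ 2).

Definition extremal (R : realType) (v : seq R) : Prop :=
  (2 <= size v)%N /\ L1 v = Lempty v.

(* subchain w_{a+1} - ... - w_b of w (1-based numbering) *)
Definition subchain (R : realType) (w : seq R) (a b : nat) : seq R :=
  take (b - a) (drop a w).

(* tilde-Sigma_odd / tilde-Sigma_even of the subchain w_{a+1}..w_b, parity
   taken w.r.t. the numbering in the whole chain (1-based index k+1). *)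
Definition tsig_odd (R : realType) (w : seq R) (a b : nat) : R :=
  \sum_(a <= k < b | ~~ odd k) w`_k.
Definition tsig_even (R : realType) (w : seq R) (a b : nat) : R :=
  \sum_(a <= k < b | odd k) w`_k.

(* Delta_j for the decomposition given by i : nat -> nat,
   C_j = w_{i_{j-1}+1} .. w_{i_j}. *)
Definition Delta (R : realType) (w : seq R) (i : nat -> nat) (j : nat) : R :=
  tsig_even w (i j.-1) (i j) * tsig_odd w (i j) (i j.+1)
  - tsig_even w (i j) (i j.+1) * tsig_odd w (i j.-1) (i j).

(* Main.v *)
Require Import Defs.
From mathcomp Require Import all_boot all_order all_algebra.
From mathcomp Require Import classical_sets reals.
From mathcomp Require Import zify ring lra.
Import Order.TTheory GRing.Theory Num.Theory.
Local Open Scope ring_scope.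

Set Implicit Arguments. Unset Strict Implicit.

Lemma feas_sq (R : realType) (v : seq R) (x : nat -> R) : (2 <= size v)%N -> feasible (size v) x ->
  forall l, (l < size v)%N -> x l ^+ 2 <= 1.
Proof.
move=> h2 hf l hl.
case: (ltnP l.+1 (size v)) => hl1.
  have := hf l hl1; have := sqr_ge0 (x l.+1); lra.
case: l hl hl1 => [|m] hl hl1; first lia.
have := hf m (leq_trans (ltnSn _) hl); have := sqr_ge0 (x m); lra.
Qed.

Lemma L1_ge (R : realType) (v : seq R) (x : nat -> R) : (2 <= size v)%N -> feasible (size v) x ->
  \sum_(i < size v) v`_i * x i <= L1 v.
Proof.
move=> h2 hf; rewrite /L1.
apply: sup_upper_bound; last by exists x.
split; first by exists (\sum_(i < size v) v`_i * x i), x.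
exists (\sum_(i < size v) (v`_i ^+ 2 + 1) / 2) => y [z [hz ->]].
apply: ler_sum => i _.
have := feas_sq h2 hz (ltn_ord i); have := sqr_ge0 (v`_i - z i); nra.
Qed.

Lemma L1_le (R : realType) (v : seq R) (B : R) : (forall x, feasible (size v) x ->
  \sum_(i < size v) v`_i * x i <= B) -> L1 v <= B.
Proof.
move=> hB; apply: ge_sup.
  exists 0, (fun _ => 0); split.
    by move=> i _; rewrite expr0n /= addr0 ler01.
  by rewrite big1 // => i _; rewrite mulr0.
by move=> y [z [hz ->]]; exact: hB.
Qed.

Lemma sub_size (R : realType) (w : seq R) a b : (a <= b <= size w)%N -> size (subchain w a b) = (b - a)%N.
Proof. move=> /andP[h1 h2]; rewrite /subchain size_take size_drop; case: ifP; lia. Qed.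

Lemma sub_nth (R : realType) (w : seq R) a b l : (a <= b <= size w)%N -> (l < b - a)%N ->
  (subchain w a b)`_l = w`_(a + l).
Proof. by move=> _ hl; rewrite /subchain nth_take // nth_drop. Qed.

Lemma sub_sum (R : realType) (w : seq R) a b (F : nat -> R -> R) (P : pred nat) :
  (a <= b <= size w)%N ->
  \sum_(l < size (subchain w a b) | P l) F l (subchain w a b)`_l =
  \sum_(a <= k < b | P (k - a)%N) F (k - a)%N w`_k.
Proof.
move=> hab; symmetry.
transitivity (\sum_(0 + a <= k < b | P (k - a)%N) F (k - a)%N w`_k);
  first by rewrite add0n.
rewrite big_addn big_mkord sub_size //; symmetry.
apply: eq_big => l; first by rewrite addnK.
move=> _; rewrite addnK sub_nth // addnC //.
Qed.


Lemma imono (i : nat -> nat) (p : nat) :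
  (forall j : nat, (j <= p)%N -> (i j < i j.+1)%N) ->
  forall m n, (m <= n <= p.+1)%N -> (i m <= i n)%N.
Proof.
move=> hm m n; elim: n => [|n IH] /andP[h1 h2].
  by have -> : m = 0%N by lia.
case: (ltnP m n.+1) => hmn.
  have := IH (ltac:(apply/andP; split; lia)); have := hm n (ltac:(lia)); lia.
by have -> : m = n.+1 by lia.
Qed.

Lemma split_sum (R : realType) (i : nat -> nat) (p : nat) (f : nat -> R) :
  (forall j : nat, (j <= p)%N -> (i j < i j.+1)%N) -> i 0%N = 0%N ->
  forall q, (q <= p.+1)%N ->
  \sum_(0 <= k < i q) f k = \sum_(1 <= j < q.+1) \sum_(i j.-1 <= k < i j) f k.
Proof.
move=> hm h0; elim=> [|q IH] hq.
  by rewrite h0 !big_geq.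
rewrite big_nat_recr //= -IH; last lia.
rewrite (big_cat_nat _ (n := i q)) //.
by apply: imono hm _ _ _; apply/andP; split; lia.
Qed.

Lemma block_ex (i : nat -> nat) (p : nat) :
  i 0%N = 0%N -> forall q k, (k < i q)%N ->
  exists j, (1 <= j <= q)%N /\ (i j.-1 <= k < i j)%N.
Proof.
move=> h0; elim=> [|q IH] k hk; first by rewrite h0 in hk.
case: (ltnP k (i q)) => hkq.
  by have [j [hj1 hj2]] := IH k hkq; exists j; split => //; lia.
by exists q.+1; split => //; apply/andP; split.
Qed.

Lemma wnn (R : realType) (w : seq R) :
  (forall k : nat, (k < size w)%N -> 0 < w`_k) -> forall k, 0 <= w`_k.
Proof.
move=> hpos k; case: (ltnP k (size w)) => hk; first exact/ltW/hpos.
by rewrite nth_default.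
Qed.

Lemma pos_sum (R : realType) (w : seq R) (P : pred nat) a b k0 :
  (forall k : nat, (k < size w)%N -> 0 < w`_k) ->
  (b <= size w)%N -> (a <= k0 < b)%N -> P k0 ->
  0 < \sum_(a <= k < b | P k) w`_k.
Proof.
move=> hpos hb /andP[h1 h2] hP.
rewrite big_mkcond (big_cat_nat _ (n := k0)) //=; last lia.
rewrite (big_ltn (m := k0)) //.
have h3 : 0 <= \sum_(a <= k < k0) (if P k then w`_k else 0).
  by apply: sumr_ge0 => k _; case: ifP => // _; apply: wnn.
have h4 : 0 <= \sum_(k0.+1 <= k < b) (if P k then w`_k else 0).
  by apply: sumr_ge0 => k _; case: ifP => // _; apply: wnn.
have h5 : 0 < w`_k0 by apply: hpos; lia.
rewrite hP; lra.
Qed.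

Lemma sum_single (R : realType) (F : nat -> R) m n j :
  (m <= j < n)%N -> (forall j', (m <= j' < n)%N -> j' != j -> F j' = 0) ->
  \sum_(m <= j' < n) F j' = F j.
Proof.
move=> hj h.
rewrite (bigD1_seq j) ?mem_index_iota ?iota_uniq //= big_seq_cond big1 ?addr0 //.
by move=> j' /andP[hin hne]; apply: h => //; rewrite -mem_index_iota.
Qed.

Lemma key (R : realType) (o1 e1 o2 e2 : R) :
  0 < o1 -> 0 < e1 -> 0 < o2 -> 0 < e2 -> e2 * o1 <= e1 * o2 ->
  (o1 / Num.sqrt (o1 ^+ 2 + e1 ^+ 2)) ^+ 2 +
  (e2 / Num.sqrt (o2 ^+ 2 + e2 ^+ 2)) ^+ 2 <= 1.
Proof.
move=> h1 h2 h3 h4 h5.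
have hD1 : 0 < o1 ^+ 2 + e1 ^+ 2 by rewrite ltr_wpDr ?sqr_ge0 ?exprn_gt0.
have hD2 : 0 < o2 ^+ 2 + e2 ^+ 2 by rewrite ltr_wpDr ?sqr_ge0 ?exprn_gt0.
rewrite !expr_div_n (sqr_sqrtr (ltW hD1)) (sqr_sqrtr (ltW hD2)).
have h6 : (e2 * o1) ^+ 2 <= (e1 * o2) ^+ 2.
  by rewrite ler_sqr // nnegrE mulr_ge0 // ltW.
have -> : o1 ^+ 2 / (o1 ^+ 2 + e1 ^+ 2) + e2 ^+ 2 / (o2 ^+ 2 + e2 ^+ 2) =
  1 - ((e1 * o2) ^+ 2 - (e2 * o1) ^+ 2) / ((o1 ^+ 2 + e1 ^+ 2) * (o2 ^+ 2 + e2 ^+ 2)).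
  by field; apply/andP; split; rewrite lt0r_neq0.
have : 0 <= ((e1 * o2) ^+ 2 - (e2 * o1) ^+ 2) / ((o1 ^+ 2 + e1 ^+ 2) * (o2 ^+ 2 + e2 ^+ 2)).
  by rewrite divr_ge0 ?subr_ge0 // mulr_ge0 // ltW.
by move=> h; rewrite lerBlDr lerDl h.
Qed.

Lemma val_sum (R : realType) (w : seq R) a b (o e : R) :
  \sum_(a <= k < b) w`_k * (if odd k then e else o) =
  o * tsig_odd w a b + e * tsig_even w a b.
Proof.
rewrite /tsig_odd /tsig_even !mulr_sumr !(big_mkcond (fun k => ~~ odd k))
  (big_mkcond (fun k => odd k)) -big_split /=.
by apply: eq_bigr => k _; case: (odd k) => /=; rewrite ?mulr0 ?add0r ?addr0 mulrC.
Qed.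

Lemma par_sum (R : realType) (w : seq R) a b (c : bool) :
  \sum_(a <= k < b | odd (k - a) == c) w`_k =
  if odd a (+) c then tsig_even w a b else tsig_odd w a b.
Proof.
rewrite /tsig_odd /tsig_even; case: ifP => hc;
rewrite big_nat_cond [RHS]big_nat_cond; apply: eq_bigl => k;
case: (boolP (a <= k < b)%N) => //= /andP[hk _]; rewrite oddB //;
by case: (odd a) c (odd k) hc => [] [] [].
Qed.

Theorem mainTheorem10 (R : realType) (w : seq R) (p : nat) (i : nat -> nat) :
  (forall k : nat, (k < size w)%N -> 0 < w`_k) ->
  i 0%N = 0%N ->
  i p.+1 = size w ->
  (forall j : nat, (j <= p)%N -> (i j < i j.+1)%N) ->
  (forall j : nat, (1 <= j <= p.+1)%N -> extremal (subchain w (i j.-1) (i j))) ->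
  (forall j : nat, (1 <= j <= p)%N -> odd (i j) -> 0 <= Delta w i j) ->
  (forall j : nat, (1 <= j <= p)%N -> ~~ odd (i j) -> Delta w i j <= 0) ->
  L1 w = \sum_(1 <= j < p.+2) L1 (subchain w (i j.-1) (i j)) /\
  \sum_(1 <= j < p.+2) L1 (subchain w (i j.-1) (i j))
    = \sum_(1 <= j < p.+2) Lempty (subchain w (i j.-1) (i j)).
Proof.
move=> hpos h0 hp hm hext hDp hDn.
have hmon := imono hm.
have hiw : forall j, (j <= p.+1)%N -> (i j <= size w)%N.
  by move=> j hj; rewrite -hp; apply: hmon; apply/andP; split.
have hsz : forall j, (1 <= j <= p.+1)%N -> (i j.-1 + 2 <= i j)%N.
  move=> j hj; have [hs _] := hext j hj.
  have hab : (i j.-1 <= i j <= size w)%N.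
    by apply/andP; split; [apply: hmon; apply/andP; split; lia | apply: hiw; lia].
  by rewrite sub_size // in hs; lia.
pose O j := tsig_odd w (i j.-1) (i j).
pose E j := tsig_even w (i j.-1) (i j).
pose N j := Num.sqrt (O j ^+ 2 + E j ^+ 2).
have hOpos : forall j, (1 <= j <= p.+1)%N -> 0 < O j.
  move=> j hj; have := hsz j hj; have := hiw j (ltac:(lia)).
  rewrite /O /tsig_odd; case hodd: (odd (i j.-1)) => h1 h2.
    by apply: (pos_sum (k0 := (i j.-1).+1)) => //; (try lia); by rewrite /= hodd.
  by apply: (pos_sum (k0 := (i j.-1))) => //; (try lia); by rewrite hodd.
have hEpos : forall j, (1 <= j <= p.+1)%N -> 0 < E j.
  move=> j hj; have := hsz j hj; have := hiw j (ltac:(lia)).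
  rewrite /E /tsig_even; case hodd: (odd (i j.-1)) => h1 h2.
    by apply: (pos_sum (k0 := (i j.-1))) => //; (try lia); by rewrite hodd.
  by apply: (pos_sum (k0 := (i j.-1).+1)) => //; (try lia); by rewrite /= hodd.
have hN : forall j, (1 <= j <= p.+1)%N -> Lempty (subchain w (i j.-1) (i j)) = N j.
  move=> j hj.
  have hab : (i j.-1 <= i j <= size w)%N.
    by apply/andP; split; [apply: hmon; apply/andP; split; lia | apply: hiw; lia].
  rewrite /Lempty /sum_odd1 /sum_even1.
  have := @sub_sum R w _ _ (fun _ r => r) (fun l => ~~ odd l) hab; rewrite /= => ->.
  have := @sub_sum R w _ _ (fun _ r => r) (fun l => odd l) hab; rewrite /= => ->.
  have -> : \sum_(i j.-1 <= k < i j | ~~ odd (k - i j.-1)) w`_k =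
            \sum_(i j.-1 <= k < i j | odd (k - i j.-1) == false) w`_k.
    by apply: eq_bigl => k; case: (odd _).
  have -> : \sum_(i j.-1 <= k < i j | odd (k - i j.-1)) w`_k =
            \sum_(i j.-1 <= k < i j | odd (k - i j.-1) == true) w`_k.
    by apply: eq_bigl => k; case: (odd _).
  rewrite !par_sum /N /O /E; case: (odd (i j.-1)) => //=.
  by rewrite addrC.
have hL : forall j, (1 <= j <= p.+1)%N -> L1 (subchain w (i j.-1) (i j)) = N j.
  by move=> j hj; have [_ ->] := hext j hj; apply: hN.
split; last first.
  apply: eq_big_nat => j hj; have hj' : (1 <= j <= p.+1)%N by lia.
  by have [_ ->] := hext j hj'.
have hL' : forall j, (1 <= j < p.+2)%N -> L1 (subchain w (i j.-1) (i j)) = N j.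
  by move=> j hj; apply: hL; lia.
rewrite (eq_big_nat _ _ hL').
have hab : forall j, (1 <= j <= p.+1)%N -> (i j.-1 <= i j <= size w)%N.
  by move=> j hj; apply/andP; split; [apply: hmon; apply/andP; split; lia | apply: hiw; lia].
apply/le_anti/andP; split.
  apply: L1_le => x hx.
  rewrite -(big_mkord xpredT (fun k => w`_k * x k)) -hp (split_sum _ hm h0) //.
  apply: ler_sum_nat => j hj; have hj' : (1 <= j <= p.+1)%N by lia.
  rewrite -hL //.
  have := @sub_sum R w _ _ (fun l r => r * x (l + i j.-1)%N) xpredT (hab j hj'); rewrite /= => hs.
  have -> : \sum_(i j.-1 <= k < i j) w`_k * x k =
            \sum_(i j.-1 <= k < i j) w`_k * x (k - i j.-1 + i j.-1)%N.
    by apply: eq_big_nat => k hk; rewrite subnK //; lia.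
  rewrite -hs; apply: (@L1_ge R _ (fun l => x (l + i j.-1)%N)); first by have [] := hext j hj'.
  move=> l; rewrite sub_size ?hab // => hl.
  apply: (hx (l + i j.-1)%N); have := hiw j (ltac:(lia)); lia.
pose c j k := if odd k then E j / N j else O j / N j.
pose X k := \sum_(1 <= j < p.+2) (if (i j.-1 <= k < i j)%N then c j k else 0).
have hX : forall j k, (1 <= j <= p.+1)%N -> (i j.-1 <= k < i j)%N -> X k = c j k.
  move=> j k hj hk; rewrite /X (sum_single (j := j)); first by rewrite hk.
    lia.
  move=> j' hj' hne; case: ifP => // /andP[h1 h2]; exfalso.
  case: (ltnP j' j) => hjj.
    have := hmon j' j.-1 (ltac:(apply/andP; split; lia)); lia.
  have := hmon j j'.-1 (ltac:(apply/andP; split; lia)); lia.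
have hNpos : forall j, (1 <= j <= p.+1)%N -> 0 < N j.
  move=> j hj; rewrite sqrtr_gt0 ltr_wpDr ?sqr_ge0 ?exprn_gt0 //; exact: hOpos.
have hNsq : forall j, (1 <= j <= p.+1)%N -> N j ^+ 2 = O j ^+ 2 + E j ^+ 2.
  by move=> j hj; rewrite sqr_sqrtr // addr_ge0 // sqr_ge0.
have hunit : forall j, (1 <= j <= p.+1)%N -> (O j / N j) ^+ 2 + (E j / N j) ^+ 2 = 1.
  move=> j hj; rewrite !expr_div_n -mulrDl -hNsq // divff //.
  by rewrite expf_neq0 // lt0r_neq0 // hNpos.
have hval : \sum_(k < size w) w`_k * X k = \sum_(1 <= j < p.+2) N j.
  rewrite -(big_mkord xpredT (fun k => w`_k * X k)) -hp (split_sum _ hm h0) //.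
  apply: eq_big_nat => j hj; have hj' : (1 <= j <= p.+1)%N by lia.
  transitivity (\sum_(i j.-1 <= k < i j) w`_k * (if odd k then E j / N j else O j / N j)).
    by apply: eq_big_nat => k hk; rewrite (hX j k hj' hk).
  rewrite val_sum !(mulrAC _ (N j)^-1) -mulrDl -!expr2 -hNsq // expr2 mulfK //.
  by rewrite lt0r_neq0 // hNpos.
rewrite -hval; apply: L1_ge.
  have := hsz 1%N (ltac:(lia)); have := hiw 1%N (ltac:(lia)); rewrite h0 /=; lia.
move=> k hk.
have hk2 : (k < i p.+1)%N by rewrite hp; lia.
have [j [hj hjk]] := @block_ex i p h0 p.+1 k hk2.
rewrite (hX j k hj hjk).
case: (ltnP k.+1 (i j)) => hk1.
  rewrite (hX j k.+1 hj (ltac:(lia))) /c /=.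
  by case: (odd k) => /=; rewrite ?hunit // addrC hunit.
have hkj : k.+1 = i j by lia.
have hjp : (j <= p)%N.
  case: (ltnP j p.+1) => hjp; first lia.
  have hj1 : j = p.+1 by lia.
  by move: hk; rewrite hkj hj1 hp ltnn.
have hj1 : (1 <= j.+1 <= p.+1)%N by lia.
have hjk1 : (i j.+1.-1 <= k.+1 < i j.+1)%N by rewrite /= hkj leqnn /= hm.
rewrite (hX j.+1 k.+1 hj1 hjk1) /c /=.
have hjj : (1 <= j <= p)%N by lia.
case hodd: (odd k) => /=.
  have hd := hDn j hjj (ltac:(by rewrite -hkj /= hodd)).
  have hd' : O j.+1 * E j <= O j * E j.+1.
    move: hd; rewrite /Delta /O /E /=; lra.
  have := key (hEpos j hj) (hOpos j hj) (hEpos j.+1 hj1) (hOpos j.+1 hj1) hd'.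
  by rewrite /N (addrC (E j ^+ 2)) (addrC (E j.+1 ^+ 2)).
have hd := hDp j hjj (ltac:(by rewrite -hkj /= hodd)).
have hd' : E j.+1 * O j <= E j * O j.+1.
  move: hd; rewrite /Delta /O /E /=; lra.
exact: (key (hOpos j hj) (hEpos j hj) (hOpos j.+1 hj1) (hEpos j.+1 hj1) hd').
Qed.
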